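(* Let $K_1\subset U(N_1)$ and $K_2\subset U(N_2)$ be compact connected subgroups and let $K=K_1\otimes K_2=\{U_1\otimes U_2\mid U_1\in K_1,U_2\in K_2\}\subset U(N_1N_2)$, where $\otimes$ is the Kronecker product. Let $A=A_1\otimes A_2$ and $C=C_1\otimes C_2$ with $A_i,C_i\in\mathbb{C}^{N_i\times N_i}$, $i=1,2$. Then $$W_K(C,A)=W_{K_1}(C_1,A_1)\cdot W_{K_2}(C_2,A_2)=\{z_1z_2\mid z_1\in W_{K_1}(C_1,A_1),\ z_2\in W_{K_2}(C_2,A_2)\}.$$ In particular, $W_K(C,A)$ is star-shaped (resp. convex) if either $W_{K_1}(C_1,A_1)$ is star-shaped (resp. convex) and $W_{K_2}(C_2,A_2)$ is contained in a ray $\{re^{i\varphi}\mid r\ge 0\}$ of the complex plane (for some fixed $\varphi\in\mathbb{R}$), or vice versa (with the roles of the indices $1$ and $2$ interchanged).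
   Context: For a compact connected subgroup $K\subset U(N)$ and $C,A\in\mathbb{C}^{N\times N}$, the relative $C$-numerical range is $W_K(C,A)=\{\mathrm{tr}(C^\dagger UAU^\dagger)\mid U\in K\}\subset\mathbb{C}$. *)

(* Defs.v *)
From HB Require Import structures.
From mathcomp Require Import all_boot all_order all_algebra.
From mathcomp Require Import complex mxtens.
From mathcomp Require Import all_classical all_reals all_analysis.

Set Implicit Arguments.
Unset Strict Implicit.
Unset Printing Implicit Defensive.

Import Order.TTheory GRing.Theory Num.Theory.
Local Open Scope ring_scope.
Local Open Scope classical_set_scope.
Local Open Scope complex_scope.

(* The complex plane R[i] gets its standard metric topology (induced by the
   modulus |z|), copied from the canonical one of the numFieldType R[i]^o.
   Matrices 'M[R[i]]_(m,n) then carry the product (entrywise) topology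
   from matrix_topology, i.e. the usual topology of C^(m x n). *)
HB.instance Definition _ (R : realType) :=
  PseudoPointedMetric.copy (R[i]) (R[i])^o.

Definition adj (R : realType) (m n : nat) (M : 'M[R[i]]_(m, n)) : 'M[R[i]]_(n, m) :=
  (map_mx (fun z : R[i] => z^*) M)^T.

Definition unitary (R : realType) (N : nat) (U : 'M[R[i]]_N) : Prop :=
  U *m adj U = 1%:M.

Definition compact_connected_subgroup_U (R : realType) (N : nat)
  (K : set 'M[R[i]]_N) : Prop :=
  [/\ K `<=` [set U | unitary U],
      K 1%:M,
      (forall U V, K U -> K V -> K (U *m V)),
      (forall U, K U -> K (adj U)) &   (* inverse of a unitary = adjoint *)
      compact K /\ connected K].

Definition relCnumrange (R : realType) (N : nat) (K : set 'M[R[i]]_N)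
  (C A : 'M[R[i]]_N) : set R[i] :=
  [set \tr (adj C *m U *m A *m adj U) | U in K].

Definition kron_group (R : realType) (N1 N2 : nat)
  (K1 : set 'M[R[i]]_N1) (K2 : set 'M[R[i]]_N2) : set 'M[R[i]]_(N1 * N2) :=
  [set tensmx U1 U2 | U1 in K1 & U2 in K2].

Definition set_mul (R : realType) (S T : set R[i]) : set R[i] :=
  [set z1 * z2 | z1 in S & z2 in T].

Definition star_shaped (R : realType) (S : set R[i]) : Prop :=
  exists2 z0, S z0 & forall (z : R[i]) (t : R), S z -> 0 <= t <= 1 ->
    S ((1 - t)%:C * z0 + t%:C * z).

Definition convexC (R : realType) (S : set R[i]) : Prop :=
  forall x y (t : R), S x -> S y -> 0 <= t <= 1 ->
    S ((1 - t)%:C * x + t%:C * y).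

Definition in_ray (R : realType) (S : set R[i]) : Prop :=
  exists phi : R, forall z, S z ->
    exists2 r : R, 0 <= r & z = (r * cos phi) +i* (r * sin phi).

(* Main.v *)
Require Import Defs.
From HB Require Import structures.
From mathcomp Require Import all_boot all_order all_algebra.
From mathcomp Require Import complex mxtens.
From mathcomp Require Import all_classical all_reals all_analysis.
From mathcomp Require Import ring lra.
Import Order.TTheory GRing.Theory Num.Theory numFieldNormedType.Exports.
Local Open Scope ring_scope.
Local Open Scope classical_set_scope.
Section S.
Variable R : realType.
Local Open Scope complex_scope.
Lemma near_dist (z : R[i]) (e : R[i]) : 0 < e -> \forall w \near z, `|z - w| < e.
Proof. move=> e0. have := @cvgr_dist_lt R[i] R[i]^o _ (nbhs z) _ id z cvg_id e e0. move=> h. exact: h. Qed.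
Lemma conj_cont : continuous (fun z : R[i] => z^*%C).
Proof.
move=> z; apply/(@cvgrPdist_lt R[i] R[i]^o _ (nbhs z) _) => e e0.
move: (@near_dist z e e0); apply: filterS => w; rewrite -rmorphB normcJ //.
Qed.
Lemma Re_cont : continuous (fun z : R[i] => complex.Re z).
Proof.
move=> z; apply/(@cvgrPdist_lt R R^o _ (nbhs z) _) => e e0.
have : 0 < e%:C by rewrite ltcR.
move/(near_dist z); apply: filterS => w /= h.
rewrite -ltcR; apply: le_lt_trans h.
rewrite -raddfB /=. exact: normc_ge_Re.
Qed.
Lemma cont_sum (T : topologicalType) I (r : seq I) (F : I -> T -> R[i]) :
  (forall i, continuous (F i)) -> continuous (fun x => \sum_(i <- r) F i x).
Proof.
move=> H x; elim: r => [|i r IH].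
  have -> : (fun x => \sum_(i <- [::]) F i x) = fun=> 0 by apply/funext=> y; rewrite big_nil.
  rewrite ?big_nil; exact: cvg_cst.
have -> : (fun x => \sum_(j <- i :: r) F j x) = (fun x => F i x + \sum_(j <- r) F j x).
  by apply/funext=> y; rewrite big_cons.
have h1 : F i y @[y --> x] --> F i x := H i x. have h2 : (\sum_(j <- r) F j y) @[y --> x] --> \sum_(j <- r) F j x := IH. exact: (@cvgD R[i] R[i]^o _ _ _ (F i) (fun y => \sum_(j <- r) F j y) _ _ h1 h2).
Qed.
Lemma cont_mul (T : topologicalType) (f g : T -> R[i]) :
  continuous f -> continuous g -> continuous (fun x => f x * g x).
Proof. move=> cf cg x; apply: cvgM; [exact: cf | exact: cg]. Qed.

Definition mcont (T : topologicalType) m n (G : T -> 'M[R[i]]_(m, n)) :=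
  forall i j, continuous (fun x => G x i j).
Arguments mcont {T m n}.

Lemma mcont_mul (T : topologicalType) m n p (G1 : T -> 'M[R[i]]_(m, n)) (G2 : T -> 'M[R[i]]_(n, p)) :
  mcont G1 -> mcont G2 -> mcont (fun x => G1 x *m G2 x).
Proof.
move=> c1 c2 i j.
have -> : (fun x => (G1 x *m G2 x) i j) = (fun x => \sum_(k <- index_enum 'I_n) G1 x i k * G2 x k j).
  by apply/funext => x; rewrite mxE.
apply: cont_sum => k; exact: cont_mul.
Qed.

Lemma mcont_cst (T : topologicalType) m n (M : 'M[R[i]]_(m, n)) : mcont (fun _ : T => M).
Proof. move=> i j x; exact: cvg_cst. Qed.

Lemma mcont_id m n : mcont (fun U : 'M[R[i]]_(m, n) => U).
Proof. move=> i j; exact: coord_continuous. Qed.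

Lemma mcont_adj (T : topologicalType) m n (G : T -> 'M[R[i]]_(m, n)) :
  mcont G -> mcont (fun x => adj (G x)).
Proof.
move=> c i j.
have -> : (fun x => adj (G x) i j) = (fun x => (G x j i)^*).
  by apply/funext => x; rewrite /adj !mxE.
move=> x; apply: (continuous_comp (c j i x)); exact: conj_cont.
Qed.

Lemma cont_f N (C A : 'M[R[i]]_N) :
  continuous (fun U : 'M[R[i]]_N => \tr (adj C *m U *m A *m adj U)).
Proof.
have h : mcont (fun U : 'M[R[i]]_N => adj C *m U *m A *m adj U).
  apply: mcont_mul; last exact/mcont_adj/mcont_id.
  apply: mcont_mul; last exact: mcont_cst.
  apply: mcont_mul; [exact: mcont_cst | exact: mcont_id].
rewrite /mxtrace; apply: cont_sum => i; exact: h.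
Qed.
Lemma adj_tens m n p q (M : 'M[R[i]]_(m,n)) (N : 'M[R[i]]_(p,q)) :
  adj (M *t N) = adj M *t adj N.
Proof. apply/matrixP => a b; rewrite /adj !mxE; exact: rmorphM. Qed.

Lemma tr_tens m n (M : 'M[R[i]]_m) (N : 'M[R[i]]_n) : \tr (M *t N) = \tr M * \tr N.
Proof. rewrite /mxtrace mulr_sum; apply: eq_bigr => k _; by rewrite mxE. Qed.

Lemma key N1 N2 (C1 A1 U1 : 'M[R[i]]_N1) (C2 A2 U2 : 'M[R[i]]_N2) :
  \tr (adj (C1 *t C2) *m (U1 *t U2) *m (A1 *t A2) *m adj (U1 *t U2)) =
  \tr (adj C1 *m U1 *m A1 *m adj U1) * \tr (adj C2 *m U2 *m A2 *m adj U2).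
Proof. by rewrite !adj_tens !tensmx_mul tr_tens. Qed.

Lemma W_eq N1 N2 (K1 : set 'M[R[i]]_N1) (K2 : set 'M[R[i]]_N2)
  (A1 C1 : 'M[R[i]]_N1) (A2 C2 : 'M[R[i]]_N2) :
  relCnumrange (kron_group K1 K2) (C1 *t C2) (A1 *t A2) =
  set_mul (relCnumrange K1 C1 A1) (relCnumrange K2 C2 A2).
Proof.
apply/seteqP; split => z.
  case=> U [U1 KU1 [U2 KU2 <-]] <-.
  exists (\tr (adj C1 *m U1 *m A1 *m adj U1)); first by exists U1.
  exists (\tr (adj C2 *m U2 *m A2 *m adj U2)); first by exists U2.
  by rewrite key.
case=> z1 [U1 KU1 <-] [z2 [U2 KU2 <-] <-].
exists (U1 *t U2); first by exists U1 => //; exists U2.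
by rewrite key.
Qed.
Definition ray_ok (T : set R[i]) (e : R[i]) :=
  (forall z, T z -> exists2 r : R, 0 <= r & z = r%:C * e) /\
  (forall r1 r2 t : R, 0 <= r1 -> 0 <= r2 -> T (r1%:C * e) -> T (r2%:C * e) ->
     0 <= t <= 1 -> T (((1 - t) * r1 + t * r2)%:C * e)).

Lemma core (S T : set R[i]) e z1 z2 (r1 r2 t : R) : ray_ok T e ->
  0 <= r1 -> 0 <= r2 -> T (r1%:C * e) -> T (r2%:C * e) -> 0 <= t <= 1 ->
  (forall s : R, 0 <= s <= 1 -> S ((1 - s)%:C * z1 + s%:C * z2)) ->
  set_mul S T ((1 - t)%:C * (z1 * (r1%:C * e)) + t%:C * (z2 * (r2%:C * e))).
Proof.
move=> [_ Hr] r10 r20 T1 T2 /andP[t0 t1] HS.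
set R' := (1 - t) * r1 + t * r2.
have TR : T (R'%:C * e) by apply: Hr => //; apply/andP.
have a0 : 0 <= (1 - t) * r1 by apply: mulr_ge0 => //; rewrite subr_ge0.
have b0 : 0 <= t * r2 by apply: mulr_ge0.
have -> : (1 - t)%:C * (z1 * (r1%:C * e)) + t%:C * (z2 * (r2%:C * e)) =
   ((1 - t) * r1)%:C * (z1 * e) + (t * r2)%:C * (z2 * e).
  rewrite !rmorphM /=; ring.
have [R0|RP] := eqVneq R' 0.
  have a00 : (1 - t) * r1 = 0 by move: R0; rewrite /R'; lra.
  have b00 : t * r2 = 0 by move: R0; rewrite /R'; lra.
  exists z1.
    have := HS 0; rewrite subr0 mul0r addr0 mul1r; apply.
    by rewrite lexx ler01.
  exists (R'%:C * e) => //.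
  by rewrite R0 a00 b00 !mul0r add0r mulr0.
have RP' : 0 < R' by rewrite lt0r RP /= /R' addr_ge0.
set s := t * r2 / R'.
have E2 : s * R' = t * r2 by rewrite /s mulrVK // unitfE.
have E1 : (1 - s) * R' = (1 - t) * r1 by rewrite mulrBl E2 mul1r /R'; ring.
exists ((1 - s)%:C * z1 + s%:C * z2).
  apply: HS; rewrite /s divr_ge0 ?ler_pdivrMr ?mul1r //=; lra.
exists (R'%:C * e) => //.
rewrite -E1 -E2 !rmorphM /=; ring.
Qed.
Lemma set_mulC (S T : set R[i]) : set_mul S T = set_mul T S.
Proof.
apply/seteqP; split => z [a Sa [b Tb <-]]; (exists b => //; exists a => //); exact: mulrC.
Qed.

Lemma star_mul (S T : set R[i]) e : star_shaped S -> ray_ok T e -> (exists w, T w) ->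
  star_shaped (set_mul S T).
Proof.
move=> [z0 Sz0 Hst] [Hr1 Hr2] [w Tw].
have [r0 r00 Ew] := Hr1 _ Tw.
exists (z0 * w); first by exists z0 => //; exists w.
move=> _ t [z Sz [w' Tw' <-]] t01.
have [r r0' Ew'] := Hr1 _ Tw'.
move: Tw Tw'; rewrite Ew Ew' => Tw Tw'.
apply: (@core S T e _ _ _ _ _ (conj Hr1 Hr2)) => // s s01; exact: Hst.
Qed.

Lemma convex_mul (S T : set R[i]) e : convexC S -> ray_ok T e -> convexC (set_mul S T).
Proof.
move=> Hc [Hr1 Hr2] _ _ t [z1 Sz1 [w1 Tw1 <-]] [z2 Sz2 [w2 Tw2 <-]] t01.
have [r1 r10 E1] := Hr1 _ Tw1.
have [r2 r20 E2] := Hr1 _ Tw2.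
move: Tw1 Tw2; rewrite E1 E2 => Tw1 Tw2.
apply: (@core S T e _ _ _ _ _ (conj Hr1 Hr2)) => // s s01; exact: Hc.
Qed.

Lemma ray_okW N (K : set 'M[R[i]]_N) (C A : 'M[R[i]]_N) :
  compact_connected_subgroup_U K -> in_ray (relCnumrange K C A) ->
  exists e, ray_ok (relCnumrange K C A) e.
Proof.
move=> [_ _ _ _ [_ cK]] [phi Hphi].
set e : R[i] := (cos phi) +i* (sin phi).
have H1 : forall z, relCnumrange K C A z -> exists2 r : R, 0 <= r & z = r%:C * e.
  move=> z /Hphi [r r0 ->]; exists r => //.
  by rewrite /e; simpc.
have ee : e * e^* = 1.
  rewrite /e; simpc; rewrite -!expr2 cos2Dsin2; apply/eqP; rewrite eq_complex /=.
  by rewrite eqxx /= mulrC addNr.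
exists e; split => // r1 r2 t r10 r20 T1 T2 t01.
set f := fun U : 'M[R[i]]_N => \tr (adj C *m U *m A *m adj U).
set h := fun U => complex.Re (f U * e^*).
have cc : continuous (fun _ : 'M[R[i]]_N => e^*) by exact: cst_continuous.
have hm : continuous (fun U => f U * e^*) := @cont_mul _ _ _ (cont_f _ C A) cc.
have hc : continuous h.
  move=> x; exact: (continuous_comp (hm x) (Re_cont _)).
have ci : is_interval (h @` K).
  apply/connected_intervalP; apply: connected_continuous_connected => //.
  exact: continuous_subspaceT.
have hv : forall U, K U -> exists2 r : R, f U = r%:C * e & h U = r.
  move=> U KU; have [r _ Er] := H1 (f U) (ex_intro2 _ _ U KU erefl).
  exists r => //; rewrite /h Er -mulrA ee mulr1 //.
have im : forall r, 0 <= r -> relCnumrange K C A (r%:C * e) -> (h @` K) r.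
  move=> r _ [U KU EU]; have [r' Er' hr'] := hv U KU.
  exists U => //; rewrite hr'.
  have : (r'%:C * e) * e^* = (r%:C * e) * e^* by rewrite -Er' /f EU.
  by rewrite -!mulrA ee !mulr1 => /eqP; rewrite eq_complex /= eqxx andbT => /eqP.
move: t01 => /andP[t0 t1].
have [U KU hU] : (h @` K) ((1 - t) * r1 + t * r2).
  have i1 := im _ r10 T1; have i2 := im _ r20 T2.
  have [le12|le21] := leP r1 r2.
    apply: (ci _ _ i1 i2); apply/andP; split; nra.
  apply: (ci _ _ i2 i1); apply/andP; split; nra.
have [r Er hr] := hv U KU.
exists U => //; rewrite -[LHS]/(f U) Er -hU hr //.
Qed.
End S.

Theorem proposition2p9 (R : realType) (N1 N2 : nat)
  (K1 : set 'M[R[i]]_N1) (K2 : set 'M[R[i]]_N2)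
  (A1 C1 : 'M[R[i]]_N1) (A2 C2 : 'M[R[i]]_N2) :
  compact_connected_subgroup_U K1 ->
  compact_connected_subgroup_U K2 ->
  let K := kron_group K1 K2 in
  let W := relCnumrange K (tensmx C1 C2) (tensmx A1 A2) in
  let W1 := relCnumrange K1 C1 A1 in
  let W2 := relCnumrange K2 C2 A2 in
  [/\ W = set_mul W1 W2,
      (star_shaped W1 /\ in_ray W2) \/ (star_shaped W2 /\ in_ray W1) ->
        star_shaped W &
      (convexC W1 /\ in_ray W2) \/ (convexC W2 /\ in_ray W1) ->
        convexC W].
Proof.
move=> h1 h2 K W W1 W2.
have EW : W = set_mul W1 W2 by exact: W_eq.
have ne1 : exists w, W1 w.
  by case: h1 => _ k1 _ _ _; eexists; exists 1%:M.
have ne2 : exists w, W2 w.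
  by case: h2 => _ k2 _ _ _; eexists; exists 1%:M.
split => //.
- case=> [[st r]|[st r]].
    have [e he] := @ray_okW R _ _ _ _ h2 r; rewrite EW; exact: (@star_mul R _ _ _ st he) ne2.
  have [e he] := @ray_okW R _ _ _ _ h1 r; rewrite EW set_mulC; exact: (@star_mul R _ _ _ st he) ne1.
- case=> [[st r]|[st r]].
    have [e he] := @ray_okW R _ _ _ _ h2 r; rewrite EW; exact: (@convex_mul R _ _ _ st he).
  have [e he] := @ray_okW R _ _ _ _ h1 r; rewrite EW set_mulC; exact: (@convex_mul R _ _ _ st he).
Qed.
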